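(* Define the relation $\succeq^5$ on $\mathcal{A}$ by $\mathbf{A}\succeq^5\mathbf{B}\iff\nu(\mathbf{A})\le\nu(\mathbf{B})$, where for $\mathbf{A}=[a_{ij}]$ of size $n$, $\nu(\mathbf{A})=\min_{1\le i<j<k\le n}\max\{a_{ij}a_{jk}/a_{ik},\ a_{ik}/(a_{ij}a_{jk})\}$. Then $\succeq^5$ is an inconsistency ranking that satisfies PR, IIP, HTE, SI and RED, but does not satisfy MON.
   Context: A pairwise comparison matrix of size $n$ is a matrix $\mathbf{A}=[a_{ij}]\in\mathbb{R}^{n\times n}$ with all entries positive and $a_{ji}=1/a_{ij}$ for all $i,j$. Let $\mathcal{A}$ denote the set of all pairwise comparison matrices of all sizes $n\ge 3$. For $\mathbf{A}\in\mathcal{A}$ of size $n$ and $3\le m\le n$, a submatrix of $\mathbf{A}$ is a matrix $\mathbf{B}=[b_{ij}]$ of size $m$ with $b_{ij}=a_{\sigma(i)\sigma(j)}$ for some strictly increasing map $\sigma:\{1,\dots,m\}\to\{1,\dots,n\}$. A triad is a pairwise comparison matrix of size $3$; a triad of $\mathbf{A}$ is a submatrix of $\mathbf{A}$ of size $3$ (when $n=3$, $\mathbf{A}$ is its own unique triad). A triad $\mathbf{T}$ is written $\mathbf{T}=(t_1;t_2;t_3)$, meaning $t_{12}=t_1$, $t_{13}=t_2$, $t_{23}=t_3$ (the remaining entries are determined by reciprocity); $\mathbf{T}^\top$ denotes its transpose, i.e. the triad $(1/t_1;1/t_2;1/t_3)$. An inconsistency ranking is a complete and transitive binary relation $\succeq$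 on $\mathcal{A}$; $\mathbf{A}\sim\mathbf{B}$ means $\mathbf{A}\succeq\mathbf{B}$ and $\mathbf{B}\succeq\mathbf{A}$; $\mathbf{A}\preceq\mathbf{B}$ means $\mathbf{B}\succeq\mathbf{A}$. Properties of an inconsistency ranking $\succeq$: (PR) for all $s_2,t_2\ge 1$: $(1;s_2;1)\succeq(1;t_2;1)\iff s_2\le t_2$. (IIP) $\mathbf{T}\sim\mathbf{T}^\top$ for every triad $\mathbf{T}$. (HTE) $(1;t_2;t_3)\sim(1;t_2/t_3;1)$ for all $t_2,t_3>0$. (SI) $(t_1;t_2;t_3)\sim(kt_1;k^2t_2;kt_3)$ for all $t_1,t_2,t_3>0$ and all $k>0$. (MON) $\mathbf{A}\preceq\mathbf{T}$ for every $\mathbf{A}\in\mathcal{A}$ and every triad $\mathbf{T}$ of $\mathbf{A}$. (RED) every $\mathbf{A}\in\mathcal{A}$ has a triad $\mathbf{T}$ with $\mathbf{A}\sim\mathbf{T}$. *)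

(* Defs.v *)
From Stdlib Require Import Reals Lra Lia List.
Import ListNotations.
Open Scope R_scope.

(* A pairwise comparison matrix of size n >= 3, entries indexed by 0..n-1
   (values outside the index range are irrelevant junk). *)
Record PCM := mkPCM {
  size : nat;
  entry : nat -> nat -> R;
  size_ge3 : (3 <= size)%nat;
  entry_pos : forall i j, (i < size)%nat -> (j < size)%nat -> 0 < entry i j;
  entry_recip : forall i j, (i < size)%nat -> (j < size)%nat ->
                  entry j i = / entry i j
}.

Definition submatrix (B A : PCM) : Prop :=
  (size B <= size A)%nat /\
  exists sigma : nat -> nat,
    (forall i j, (i < j)%nat -> (j < size B)%nat -> (sigma i < sigma j)%nat) /\
    (forall i, (i < size B)%nat -> (sigma i < size A)%nat) /\
    (forall i j, (i < size B)%nat -> (j < size B)%nat ->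
       entry B i j = entry A (sigma i) (sigma j)).

Definition triad_of (T A : PCM) : Prop := size T = 3%nat /\ submatrix T A.

Definition is_triad (T : PCM) (t1 t2 t3 : R) : Prop :=
  size T = 3%nat /\ entry T 0 1 = t1 /\ entry T 0 2 = t2 /\ entry T 1 2 = t3.

Definition is_transpose (T' T : PCM) : Prop :=
  size T = 3%nat /\ size T' = 3%nat /\
  forall i j, (i < 3)%nat -> (j < 3)%nat -> entry T' i j = entry T j i.

Definition triples (n : nat) : list (nat * nat * nat) :=
  flat_map (fun i =>
    flat_map (fun j =>
      map (fun k => (i, j, k)) (seq (S j) (n - S j)))
    (seq (S i) (n - S i)))
  (seq 0 n).

Definition tri_incons (A : PCM) (t : nat * nat * nat) : R :=
  let '(i, j, k) := t in
  Rmax (entry A i j * entry A j k / entry A i k)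
       (entry A i k / (entry A i j * entry A j k)).

(* nu(A) = min over i<j<k of max{a_ij a_jk / a_ik, a_ik / (a_ij a_jk)};
   the list is nonempty (n >= 3) and contains (0,1,2), which is used as
   the initial value of the fold, so this is exactly the minimum. *)
Definition nu (A : PCM) : R :=
  fold_right (fun t acc => Rmin (tri_incons A t) acc)
             (tri_incons A (0%nat, 1%nat, 2%nat)) (triples (size A)).

Definition ge5 (A B : PCM) : Prop := nu A <= nu B.

Definition sim (Rel : PCM -> PCM -> Prop) (A B : PCM) : Prop := Rel A B /\ Rel B A.

Definition inconsistency_ranking (Rel : PCM -> PCM -> Prop) : Prop :=
  (forall A B, Rel A B \/ Rel B A) /\
  (forall A B C, Rel A B -> Rel B C -> Rel A C).

Definition PR (Rel : PCM -> PCM -> Prop) : Prop :=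
  forall (s2 t2 : R) (S T : PCM), 1 <= s2 -> 1 <= t2 ->
    is_triad S 1 s2 1 -> is_triad T 1 t2 1 -> (Rel S T <-> s2 <= t2).

Definition IIP (Rel : PCM -> PCM -> Prop) : Prop :=
  forall T T' : PCM, is_transpose T' T -> sim Rel T T'.

Definition HTE (Rel : PCM -> PCM -> Prop) : Prop :=
  forall (t2 t3 : R) (T S : PCM), 0 < t2 -> 0 < t3 ->
    is_triad T 1 t2 t3 -> is_triad S 1 (t2 / t3) 1 -> sim Rel T S.

Definition SI (Rel : PCM -> PCM -> Prop) : Prop :=
  forall (t1 t2 t3 k : R) (T S : PCM), 0 < t1 -> 0 < t2 -> 0 < t3 -> 0 < k ->
    is_triad T t1 t2 t3 -> is_triad S (k * t1) (k ^ 2 * t2) (k * t3) ->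
    sim Rel T S.

(* MON: A ⪯ T, i.e. T ⪰ A, for every triad T of A *)
Definition MON (Rel : PCM -> PCM -> Prop) : Prop :=
  forall A T : PCM, triad_of T A -> Rel T A.

Definition RED (Rel : PCM -> PCM -> Prop) : Prop :=
  forall A : PCM, exists T : PCM, triad_of T A /\ sim Rel A T.

(* Main.v *)
Require Import Defs.
From Stdlib Require Import Reals.
From Stdlib Require Import Lra Lia List.
Import ListNotations.
Open Scope R_scope.

Lemma nu3 T : size T = 3%nat -> nu T = tri_incons T (0,1,2)%nat.
Proof. intros H. unfold nu. rewrite H. simpl. apply Rmin_left. lra. Qed.

Lemma tri3 T a b c : is_triad T a b c -> nu T = Rmax (a*c/b) (b/(a*c)).
Proof.
  intros [Hs [H1 [H2 H3]]]. rewrite nu3 by exact Hs. simpl.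
  rewrite H1, H2, H3. reflexivity.
Qed.

Lemma fold_le (f : nat*nat*nat -> R) init l :
  fold_right (fun t acc => Rmin (f t) acc) init l <= init.
Proof.
  induction l; simpl. lra. eapply Rle_trans; [apply Rmin_r|exact IHl].
Qed.

Lemma fold_attain (f : nat*nat*nat -> R) init l :
  fold_right (fun t acc => Rmin (f t) acc) init l = init \/
  exists t, In t l /\ fold_right (fun t acc => Rmin (f t) acc) init l = f t.
Proof.
  induction l; simpl. now left.
  apply Rmin_case.
  - right. exists a. split; auto.
  - destruct IHl as [H|[t [Ht E]]]. now left. right. exists t; auto.
Qed.

Lemma in_triples n i j k : In (i,j,k) (triples n) -> (i<j /\ j<k /\ k<n)%nat.
Proof.
  unfold triples; intros H.
  apply in_flat_map in H as [i' [Hi' H]].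
  apply in_flat_map in H as [j' [Hj' H]].
  apply in_map_iff in H as [k' [E Hk']]. inversion E; subst.
  apply in_seq in Hi'. apply in_seq in Hj'. apply in_seq in Hk'. lia.
Qed.

Definition sig3 (i j k : nat) (a : nat) : nat :=
  match a with 0%nat => i | 1%nat => j | _ => k end.

Lemma sig3_lt i j k n a : (i<j)%nat -> (j<k)%nat -> (k<n)%nat -> (sig3 i j k a < n)%nat.
Proof. intros; destruct a as [|[|]]; simpl; lia. Qed.

Definition restr (A:PCM) i j k (Hij: (i<j)%nat) (Hjk: (j<k)%nat) (Hk: (k<size A)%nat) : PCM.
Proof.
  refine (mkPCM 3 (fun a b => entry A (sig3 i j k a) (sig3 i j k b)) _ _ _).
  - lia.
  - intros; apply entry_pos; apply sig3_lt; auto.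
  - intros; apply entry_recip; apply sig3_lt; auto.
Defined.

Lemma restr_triad A i j k Hij Hjk Hk : triad_of (restr A i j k Hij Hjk Hk) A.
Proof.
  split. reflexivity. split. simpl. apply size_ge3.
  exists (sig3 i j k). split; [|split].
  - simpl. intros a b Hab Hb. destruct a as [|[|]]; destruct b as [|[|[|]]]; simpl; lia.
  - intros; apply sig3_lt; auto.
  - intros; reflexivity.
Qed.

Lemma restr_nu A i j k Hij Hjk Hk : nu (restr A i j k Hij Hjk Hk) = tri_incons A (i,j,k).
Proof. rewrite nu3 by reflexivity. reflexivity. Qed.

Definition ex_entry (i j : nat) : R :=
  if (Nat.eqb i 0 && Nat.eqb j 3)%bool then 2
  else if (Nat.eqb i 3 && Nat.eqb j 0)%bool then /2 else 1.

Definition exA : PCM.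
Proof.
  refine (mkPCM 4 ex_entry _ _ _).
  - lia.
  - intros i j _ _. unfold ex_entry.
    destruct (Nat.eqb i 0 && Nat.eqb j 3)%bool; [lra|].
    destruct (Nat.eqb i 3 && Nat.eqb j 0)%bool; lra.
  - intros i j Hi Hj.
    destruct i as [|[|[|[|]]]]; try lia; destruct j as [|[|[|[|]]]]; try lia;
      unfold ex_entry; simpl; field.
Defined.

Theorem mainTheorem6 :
  inconsistency_ranking ge5 /\ PR ge5 /\ IIP ge5 /\ HTE ge5 /\ SI ge5 /\
  RED ge5 /\ ~ MON ge5.
Proof.
  unfold inconsistency_ranking, PR, IIP, HTE, SI, RED, MON, ge5, sim. split; [|split; [|split; [|split; [|split; [|split]]]]].
  - split. intros A B. destruct (Rle_dec (nu A) (nu B)); [left|right]; lra.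
    intros; lra.
  - intros s t S T Hs Ht HS HT. rewrite (tri3 _ _ _ _ HS), (tri3 _ _ _ _ HT).
    assert (E : forall x, 1 <= x -> Rmax (1*1/x) (x/(1*1)) = x).
    { intros x Hx. replace (1*1/x) with (/x) by (field; lra).
      replace (x/(1*1)) with x by field. apply Rmax_right.
      assert (/x <= /1) by (apply Rinv_le_contravar; lra). rewrite Rinv_1 in H. lra. }
    rewrite (E s Hs), (E t Ht). tauto.
  - intros T T' [H1 [H2 H3]]. rewrite (nu3 T' H2), (nu3 T H1). simpl.
    rewrite !H3 by lia.
    assert (L : (0 < size T)%nat) by lia. assert (L1 : (1 < size T)%nat) by lia.
    assert (L2 : (2 < size T)%nat) by lia.
    rewrite (entry_recip T 0 1), (entry_recip T 1 2), (entry_recip T 0 2) by auto.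
    pose proof (entry_pos T 0 1 L L1). pose proof (entry_pos T 1 2 L1 L2).
    pose proof (entry_pos T 0 2 L L2).
    set (a := entry T 0 1) in *. set (b := entry T 0 2) in *. set (c := entry T 1 2) in *.
    replace (/a * /c / /b) with (b/(a*c)) by (field; lra).
    replace (/b / (/a * /c)) with (a*c/b) by (field; lra).
    rewrite Rmax_comm. split; lra.
  - intros t2 t3 T S H2 H3 HT HS. rewrite (tri3 _ _ _ _ HT), (tri3 _ _ _ _ HS).
    replace (1*1/(t2/t3)) with (1*t3/t2) by (field; lra).
    replace (t2/t3/(1*1)) with (t2/(1*t3)) by (field; lra). split; lra.
  - intros t1 t2 t3 k T S H1 H2 H3 Hk HT HS. rewrite (tri3 _ _ _ _ HT), (tri3 _ _ _ _ HS).
    replace (k*t1*(k*t3)/(k^2*t2)) with (t1*t3/t2) by (field; lra).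
    replace (k^2*t2/(k*t1*(k*t3))) with (t2/(t1*t3)) by (field; lra). split; lra.
  - intros A.
    destruct (fold_attain (tri_incons A) (tri_incons A (0,1,2)%nat) (triples (size A)))
      as [E|[[[i j] k] [Hin E]]].
    + pose proof (size_ge3 A) as G.
      assert (Hk : (2 < size A)%nat) by lia.
      exists (restr A 0 1 2 ltac:(lia) ltac:(lia) Hk). split. apply restr_triad.
      rewrite restr_nu. unfold nu. rewrite E. split; lra.
    + destruct (in_triples _ _ _ _ Hin) as [Hij [Hjk Hk]].
      exists (restr A i j k Hij Hjk Hk). split. apply restr_triad.
      rewrite restr_nu. unfold nu. rewrite E. split; lra.
  - intros MON.
    assert (Hk : (3 < size exA)%nat) by (simpl; lia).
    pose proof (MON exA (restr exA 0 1 3 ltac:(lia) ltac:(lia) Hk) (restr_triad _ _ _ _ _ _ _)) as H.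
    rewrite restr_nu in H.
    pose proof (fold_le (tri_incons exA) (tri_incons exA (0,1,2)%nat) (triples (size exA))) as H2.
    fold (nu exA) in H2.
    simpl in H, H2. unfold ex_entry in H, H2. simpl in H, H2.
    unfold Rmax in H, H2.
    destruct (Rle_dec _ _) in H; destruct (Rle_dec _ _) in H2; lra.
Qed.
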